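(* In the SMA-DP-SGD setting below, fix an iteration $t$ and a realizable global prior private release history $\mathcal H_t$. Let $\varepsilon_{\mathrm{SGM}}(\lambda_{\mathrm R};q,\sigma)$ denote any valid Rényi-DP upper bound at order $\lambda_{\mathrm R}>1$ for the Poisson-subsampled Gaussian mechanism with subsampling probability $q$ and noise-to-sensitivity ratio $\sigma$, and define $$\sigma_{\mathrm{eff},t}=\frac{1}{\beta\left(\sum_{g=1}^G\sigma_{t,g}^{-2}\right)^{1/2}}.$$ Then the joint release $$\tilde s_t=r_t(D;m_t,\mathcal H_t)+Z_t,\qquad Z_t\sim\mathcal N(0,\Sigma_t),$$ where $m_t$ is a Poisson mask with probability $q_t$, satisfies $\left(\lambda_{\mathrm R},\varepsilon_{\mathrm{SGM}}(\lambda_{\mathrm R};q_t,\sigma_{\mathrm{eff},t})\right)$-RDP for every $\lambda_{\mathrm R}>1$.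
   Context: SMA-DP-SGD setting: dataset $D=\{x_1,\dots,x_N\}$; adjacency is add/remove of one example. Parameters are partitioned into groups $g=1,\dots,G$ (dimension $d_g$, identity $I_g$), with clipping norms $C^{(g)}>0$, noise multipliers $\sigma_{t,g}>0$, and fixed mixing coefficient $\beta\in(0,1]$. At step $t$, a Poisson mask $m_t=(m_{t,1},\dots,m_{t,N})$ is drawn with $m_{t,i}\sim\mathrm{Bernoulli}(q_t)$ independently, and the same mask is used for all groups. For each group, $s_t^{(g)}(D;m_t)=\sum_i m_{t,i}\bar g_t^{(g)}(x_i)$, where $\bar g_t^{(g)}(x_i)=g_t^{(g)}(x_i)/\max(1,\|g_t^{(g)}(x_i)\|_2/C^{(g)})$ is the clipped per-example gradient of group $g$ at the current model $\theta_t$. The group query is $r_t^{(g)}(D;m_t,\mathcal H_t)=\beta s_t^{(g)}(D;m_t)+b_t^{(g)}(\mathcal H_t)$, where the memory branch $b_t^{(g)}$ is a deterministic function of the global prior private release history $\mathcal H_t$ (all previous noisy releases $\tilde s_r^{(h)}$, $r<t$), of the model state induced by them, and of public hyperparameters, and does not depend on the current data. The joint query is $r_t=(r_t^{(1)},\dots,r_t^{(G)})$ and $\Sigma_t=\operatorname{diag}(\sigma_{t,1}^2(C^{(1)})^2I_1,\ldots,\sigma_{t,G}^2(C^{(G)})^2I_G)$. *)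

(* Defs.v *)
From HB Require Import structures.
From mathcomp Require Import all_boot all_order all_algebra.
From mathcomp Require Import all_classical all_reals all_analysis.
Set Implicit Arguments. Unset Strict Implicit. Unset Printing Implicit Defensive.
Import Order.TTheory GRing.Theory Num.Theory.
Import numFieldNormedType.Exports.
Local Open Scope classical_set_scope.
Local Open Scope ring_scope.

Section Defs.
Variable R : realType.

Definition l2norm (T : finType) (v : T -> R) : R :=
  Num.sqrt (\sum_(k : T) v k ^+ 2).

Definition gnorm (d G : nat) (grp : 'I_d -> 'I_G) (g : 'I_G) (v : 'I_d -> R) : R :=
  Num.sqrt (\sum_(k < d | grp k == g) v k ^+ 2).

Definition clip (d G : nat) (grp : 'I_d -> 'I_G) (C : 'I_G -> R) (v : 'I_d -> R)
  : 'I_d -> R :=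
  fun k => v k / Num.max 1 (gnorm grp (grp k) v / C (grp k)).

Definition gauss (T : finType) (var mu : T -> R) (y : T -> R) : R :=
  \prod_(k : T) ((Num.sqrt (2 * pi * var k))^-1 *
                 expR (- (y k - mu k) ^+ 2 / (2 * var k))).

(* Density of  shift + sum_i m_i us_i + N(0, diag var),  m_i ~ Bernoulli(q) i.i.d. *)
Definition mixdens (T : finType) (q : R) (us : seq (T -> R)) (shift var : T -> R)
  (y : T -> R) : R :=
  \sum_(m : {ffun 'I_(size us) -> bool})
     (\prod_(i < size us) (if m i then q else 1 - q)) *
     gauss var (fun k => shift k + \sum_(i < size us | m i) tnth (in_tuple us) i k) y.

(* Lebesgue integral on R^T, written as the iterated (Tonelli) integral over
   the coordinates listed in s, starting from the point v. *)
Fixpoint iint (T : finType) (s : seq T) (f : (T -> R) -> \bar R) (v : T -> R)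
  : \bar R :=
  match s with
  | [::] => f v
  | t :: s' => (\int[lebesgue_measure]_x
                  iint s' f (fun k => if k == t then x else v k))%E
  end.

Definition integral_Rn (T : finType) (f : (T -> R) -> \bar R) : \bar R :=
  iint (enum T) f (fun _ => 0).

Definition renyi (T : finType) (lam : R) (p q : (T -> R) -> R) : \bar R :=
  match integral_Rn (fun y => ((p y) `^ lam * (q y) `^ (1 - lam))%:E) with
  | r%:E => (ln r / (lam - 1))%:E
  | +oo%E => +oo%E
  | -oo%E => -oo%E
  end.

End Defs.

Definition adjacent_ds (X : Type) (D D' : seq X) : Prop :=
  exists (x : X) (s1 s2 : seq X),
    (D = s1 ++ x :: s2 /\ D' = s1 ++ s2) \/ (D' = s1 ++ x :: s2 /\ D = s1 ++ s2).

(* e is a valid order-lam RDP bound for the Poisson-subsampled Gaussian mechanism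
   with sampling probability q and noise-to-sensitivity ratio s: in any dimension,
   for per-example contributions of l2 norm at most 1 (sensitivity 1), the release
   sum_i m_i v_i + N(0, s^2 I) has Renyi divergence at most e between adjacent_ds datasets. *)
Definition SGM_rdp_bound (R : realType) (lam q s e : R) : Prop :=
  forall (n : nat) (D D' : seq ('I_n -> R)),
    adjacent_ds D D' ->
    (forall i : 'I_(size (D ++ D')), l2norm (tnth (in_tuple (D ++ D')) i) <= 1) ->
    (renyi lam (mixdens q D (fun _ => 0%R) (fun _ => (s ^+ 2)%R))
               (mixdens q D' (fun _ => 0%R) (fun _ => (s ^+ 2)%R)) <= e%:E)%E.

Definition sigma_eff (R : realType) (G : nat) (beta : R) (sigma : 'I_G -> R) : R :=
  (beta * Num.sqrt (\sum_(g < G) (sigma g)^-2))^-1.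

(* Output density of the SMA-DP-SGD joint release at a fixed step:
   beta * sum_i m_i clip(grad x_i) + b + N(0, Sigma_t),
   Sigma_t = diag(sigma_g^2 C_g^2 on group g). *)
Definition sma_dens (R : realType) (X : Type) (d G : nat) (grp : 'I_d -> 'I_G)
  (C sigma : 'I_G -> R) (beta q : R) (grad : X -> 'I_d -> R) (b : 'I_d -> R)
  (D : seq X) : ('I_d -> R) -> R :=
  mixdens q (map (fun x k => beta * clip grp C (grad x) k) D) b
            (fun k => sigma (grp k) ^+ 2 * C (grp k) ^+ 2).

(* Main.v *)
Require Import Defs.
From HB Require Import structures.
From mathcomp Require Import all_boot all_order all_algebra.
From mathcomp Require Import all_classical all_reals all_analysis.
From mathcomp Require Import measurable_realfun lebesgue_integral.
From mathcomp Require Import ring lra.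
Import Order.TTheory GRing.Theory Num.Theory.
Local Open Scope ring_scope.
Local Open Scope classical_set_scope.

Import HBNNSimple.
Section OneD.
Variable R : realType.
Local Notation mu := (@lebesgue_measure R).
Local Open Scope ereal_scope.

Lemma int_mono (f g : R -> \bar R) : (forall x, 0 <= f x) -> (forall x, f x <= g x) ->
  \int[mu]_x f x <= \int[mu]_x g x.
Proof.
move=> f0 fg.
have g0 x : 0 <= g x by apply: le_trans (f0 x) (fg x).
rewrite !ge0_integralTE //; apply: le_ereal_sup => _ [h /= hf <-].
exists h => //= x; exact: le_trans (hf x) (fg x).
Qed.

Lemma int_le_sup (f : R -> \bar R) (M : \bar R) : (forall x, 0 <= f x) ->
  (forall h : R -> \bar R, measurable_fun [set: R] h -> (forall x, 0 <= h x) ->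
     (forall x, h x <= f x) -> \int[mu]_x h x <= M) ->
  \int[mu]_x f x <= M.
Proof.
move=> f0 H; rewrite ge0_integralTE //; apply: ge_ereal_sup => _ [h /= hf <-].
rewrite -integralT_nnsfun; apply: H => //.
- by apply/measurable_EFinP; exact: (@measurable_funPT _ _ (measurableTypeR R) _ h).
- by move=> x; rewrite lee_fin.
Qed.

End OneD.

Section S. Variable R : realType.
Local Notation mu := (@lebesgue_measure R).
Variables (a c : R) (a0 : 0 < a).
Let phi : R -> R := fun x => a * x + c.
Let mphi : measurable_fun [set: R] phi.
Proof. by apply: measurable_funD => //; apply: measurable_funM. Qed.
Let k : {nonneg R} := NngNum (ltW a0).

Lemma preim_oc (u v : R) : phi @^-1` `]u, v] = `](u - c) / a, (v - c) / a].
Proof.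
apply/seteqP; split => x /=; rewrite !in_itv /= /phi.
  by rewrite ltr_pdivrMr // ler_pdivlMr // (mulrC x) ltrBlDr lerBrDr.
by rewrite ltr_pdivrMr // ler_pdivlMr // (mulrC x) ltrBlDr lerBrDr.
Qed.

Lemma leb_affine (A : set R) : measurable A -> (mu A = a%:E * mu (phi @^-1` A))%E.
Proof.
move=> mA.
have := @lebesgue_measure_unique R (mscale k (pushforward mu (phi : measurableTypeR R -> measurableTypeR R))) _ A mA.
apply.
move=> X /ocitvP [->|[[u v] /= uv ->]].
  by rewrite /= /mscale/= /pushforward preimage_set0 !measure0 mule0.
rewrite /= /mscale/= /pushforward preim_oc !lebesgue_measure_itv /= !lte_fin uv.
rewrite ltr_pM2r ?invr_gt0 // ltrD2r uv /= -EFinM; congr (_%:E).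
by field; rewrite gt_eqF.

Qed.

Lemma cov_meas (g : R -> \bar R) : measurable_fun [set: R] g -> (forall x, 0 <= g x)%E ->
  (\int[mu]_x (a%:E * g (phi x)) = \int[mu]_x g x)%E.
Proof.
move=> mg g0.
have mgp : measurable_fun [set: R] (g \o phi) by exact: measurableT_comp mg mphi.
rewrite ge0_integralZl_EFin //; last exact: ltW.
have -> : (\int[mu]_x g (phi x) = \int[mu]_(x in phi @^-1` setT) (g \o phi) x)%E by [].
rewrite -(@ge0_integral_pushforward _ _ (measurableTypeR R) (measurableTypeR R) R phi mphi mu setT g) //.
have ki : (0 <= a^-1) by rewrite invr_ge0 ltW.
rewrite (eq_measure_integral (mscale (NngNum ki) mu)); last first.
  move=> A mA _; rewrite /= /mscale /= /pushforward (@leb_affine A mA) muleA -EFinM.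
  by rewrite mulVf ?gt_eqF // mul1e.
rewrite ge0_integral_mscale //= muleA -EFinM divff ?gt_eqF // mul1e.
by [].
Qed.

Let psi : R -> R := fun y => a^-1 * y + (- (c / a)).
Let mpsi : measurable_fun [set: R] psi.
Proof. by apply: measurable_funD => //; apply: measurable_funM. Qed.
Let psiK x : psi (phi x) = x.
Proof. by rewrite /psi /phi; field; rewrite gt_eqF. Qed.
Let phiK y : phi (psi y) = y.
Proof. by rewrite /psi /phi; field; rewrite gt_eqF. Qed.

Lemma cov (f : R -> \bar R) : (forall x, 0 <= f x)%E ->
  (\int[mu]_x (a%:E * f (phi x)) = \int[mu]_x f x)%E.
Proof.
move=> f0.
have af0 x : (0 <= a%:E * f (phi x))%E by rewrite mule_ge0 // lee_fin ltW.
apply/le_anti/andP; split.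
  apply: int_le_sup => // h mh h0 hf.
  pose h' y := (a^-1%:E * h (psi y))%E.
  have mh' : measurable_fun [set: R] h'.
    by apply: measurable_funeM; exact: measurableT_comp mh mpsi.
  have h'0 y : (0 <= h' y)%E by rewrite mule_ge0 // lee_fin invr_ge0 ltW.
  have -> : (\int[mu]_x h x = \int[mu]_x (a%:E * h' (phi x)))%E.
    apply: eq_integral => x _; rewrite /h' psiK muleA -EFinM divff ?gt_eqF //.
    by rewrite mul1e.
  rewrite cov_meas //; apply: int_mono => // y.
  rewrite /h'; have := hf (psi y); rewrite phiK => hy.
  have an0 : a != 0 by rewrite gt_eqF.
  rewrite -[f y]mul1e -(mulVf an0) EFinM -muleA.
  apply: lee_wpmul2l => //; by rewrite lee_fin invr_ge0 ltW.
apply: int_le_sup => // h mh h0 hf.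
rewrite -cov_meas //; apply: int_mono => // x.
  by rewrite mule_ge0 // lee_fin ltW.
by apply: lee_wpmul2l => //; rewrite lee_fin ltW.
Qed.
End S.

Section Pull.
Variable R : realType.
Local Notation mu := (@lebesgue_measure R).
Local Open Scope ereal_scope.

Lemma int_pull (k : R) (f : R -> \bar R) : (0 <= k)%R -> (forall x, 0 <= f x) ->
  \int[mu]_x (k%:E * f x) = k%:E * \int[mu]_x f x.
Proof.
move=> k0 f0; have [->|kp] := eqVneq k 0%R.
  rewrite mul0e (eq_integral (fun=> 0)) ?integral0 // => x _; exact: mul0e.
have kgt : (0 < k)%R by rewrite lt_neqAle eq_sym kp.
have kf0 x : 0 <= k%:E * f x by rewrite mule_ge0.
apply/le_anti/andP; split.
  apply: int_le_sup => // h mh h0 hf.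
  have -> : \int[mu]_x h x = \int[mu]_x (k%:E * ((k^-1)%:E * h x)).
    by apply: eq_integral => x _; rewrite muleA -EFinM divff // mul1e.
  have mh' : measurable_fun [set: R] (fun x => (k^-1)%:E * h x) by exact: measurable_funeM.
  have h'0 : forall x, [set: R] x -> 0 <= (k^-1)%:E * h x.
    by move=> x _; rewrite mule_ge0 // lee_fin invr_ge0.
  rewrite ge0_integralZl_EFin //; try by rewrite ltW.
  all: try (by move=> x _; rewrite mule_ge0 // lee_fin invr_ge0).
  apply: lee_wpmul2l; first by rewrite lee_fin.
  apply: int_mono => [x|x]; first by rewrite mule_ge0 // lee_fin invr_ge0.
  rewrite -[f x]mul1e -(mulVf kp) EFinM -muleA.
  by apply: lee_wpmul2l => //; rewrite lee_fin invr_ge0.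
have -> : \int[mu]_x (k%:E * f x) = k%:E * ((k^-1)%:E * \int[mu]_x (k%:E * f x)).
  by rewrite muleA -EFinM divff // mul1e.
apply: lee_wpmul2l; first by rewrite lee_fin.
apply: int_le_sup => // h mh h0 hf.
have -> : \int[mu]_x h x = (k^-1)%:E * \int[mu]_x (k%:E * h x).
  by rewrite ge0_integralZl_EFin // muleA -EFinM mulVf // mul1e.
apply: lee_wpmul2l; first by rewrite lee_fin invr_ge0.
apply: int_mono => x; first by rewrite mule_ge0.
by apply: lee_wpmul2l => //; rewrite lee_fin.
Qed.
End Pull.

Section Multi.
Variables (R : realType) (T : finType).
Local Open Scope ereal_scope.

Definition upd (v : T -> R) (t : T) (x : R) : T -> R :=
  fun k => if k == t then x else v k.

Lemma iint_cons (t : T) s (f : (T -> R) -> \bar R) v :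
  iint (t :: s) f v = \int[lebesgue_measure]_x iint s f (upd v t x).
Proof. by []. Qed.

Lemma iint_ge0 s (f : (T -> R) -> \bar R) v : (forall y, 0 <= f y) -> 0 <= iint s f v.
Proof.
move=> f0; elim: s v => [|t s IH] v /=; first exact: f0.
by apply: integral_ge0 => x _; exact: IH.
Qed.

Lemma iint_scale s (f : (T -> R) -> \bar R) v (k : R) : (0 <= k)%R -> (forall y, 0 <= f y) ->
  iint s (fun y => k%:E * f y) v = k%:E * iint s f v.
Proof.
move=> k0 f0; elim: s v => [|t s IH] v //=.
rewrite -int_pull //; last by move=> x; exact: iint_ge0.
by apply: eq_integral => x _; rewrite IH.
Qed.

Lemma iint_indep s (f : (T -> R) -> \bar R) v v' :
  (forall k, k \notin s -> v k = v' k) -> iint s f v = iint s f v'.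
Proof.
elim: s v v' => [|t s IH] v v' H /=.
  by congr (f _); apply: funext => k; exact: H.
apply: eq_integral => x _; apply: IH => k ks /=.
case: ifP => // /negbT kt.
by apply: H; rewrite inE negb_or kt.
Qed.

Lemma iint_cov s (f : (T -> R) -> \bar R) v (w c : T -> R) :
  (forall k, (0 < w k)%R) -> (forall y, 0 <= f y) ->
  iint s (fun y => (\prod_(k <- s) w k)%:E * f (fun k => (w k * y k + c k)%R)) v
  = iint s f (fun k => (w k * v k + c k)%R).
Proof.
move=> w0; elim: s f v => [|t s IH] f v f0.
  by rewrite /= big_nil mul1e.
rewrite /=.
have e1 : forall x, iint s (fun y => (\prod_(k <- (t :: s)) w k)%:E *
      f (fun k => (w k * y k + c k)%R)) (fun k => if k == t then x else v k)
   = (w t)%:E * iint s f (fun k => if k == t then (w t * x + c t)%R else (w k * v k + c k)%R).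
  move=> x.
  have -> : (fun y => (\prod_(k <- (t :: s)) w k)%:E * f (fun k => (w k * y k + c k)%R))
     = (fun y => (\prod_(k <- s) w k)%:E * (fun z => (w t)%:E * f z) (fun k => (w k * y k + c k)%R)).
    apply: funext => y; rewrite big_cons EFinM /=.
    by rewrite muleA (muleC (w t)%:E) -muleA.
  rewrite (IH (fun z => (w t)%:E * f z)); last by move=> y; rewrite mule_ge0 // lee_fin ltW.
  rewrite iint_scale //; last exact: ltW.
  congr (_ * iint _ _ _); apply: funext => k.
  by case: eqP => [->|].
pose G := fun z => iint s f (fun k => if k == t then z else (w k * v k + c k)%R).
transitivity (\int[lebesgue_measure]_x ((w t)%:E * G (w t * x + c t)%R)).
  by apply: eq_integral => x _; rewrite e1.
apply: (@cov R (w t) (c t) (w0 t) G) => z; exact: iint_ge0.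
Qed.

Lemma intRn_cov (w c : T -> R) (h : (T -> R) -> \bar R) :
  (forall k, (0 < w k)%R) -> (forall y, 0 <= h y) ->
  integral_Rn (fun y => (\prod_k w k)%:E * h (fun k => (w k * y k + c k)%R))
  = integral_Rn h.
Proof.
move=> w0 h0; rewrite /integral_Rn.
have -> : (\prod_k w k = \prod_(k <- enum T) w k)%R by rewrite big_enum.
rewrite iint_cov //; apply: iint_indep => k; by rewrite mem_enum.
Qed.
End Multi.



Section Dens.
Variables (R : realType) (T : finType).

Lemma gauss_scale (v s2 w mu mu' y y' : T -> R) :
  (forall k, 0 < w k) -> (forall k, 0 < v k) -> (forall k, s2 k = w k ^+ 2 * v k) ->
  (forall k, y' k - mu' k = w k * (y k - mu k)) ->
  gauss v mu y = (\prod_k w k) * gauss s2 mu' y'.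
Proof.
move=> w0 v0 s2E yE; rewrite /gauss -big_split /=; apply: eq_bigr => k _.
rewrite s2E yE.
have -> : - (w k * (y k - mu k)) ^+ 2 / (2 * (w k ^+ 2 * v k)) = - (y k - mu k) ^+ 2 / (2 * v k).
  by field; apply/andP; split; rewrite gt_eqF.
have -> : 2 * pi * (w k ^+ 2 * v k) = w k ^+ 2 * (2 * pi * v k) by ring.
rewrite (@sqrtrM _ (w k ^+ 2)) ?sqr_ge0 // sqrtr_sqr gtr0_norm //.
have sp : 0 < Num.sqrt (2 * pi * v k) by rewrite sqrtr_gt0 !mulr_gt0 // pi_gt0.
rewrite mulrA; congr (_ * _); by rewrite invfM mulrA divff ?gt_eqF // mul1r.
Qed.

Lemma gauss_ge0 (v mu y : T -> R) : 0 <= gauss v mu y.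
Proof.
by apply: prodr_ge0 => k _; rewrite mulr_ge0 ?expR_ge0 // invr_ge0 sqrtr_ge0.
Qed.

Definition mixd (n : nat) (q : R) (F : nat -> T -> R) (shift var : T -> R) (y : T -> R) : R :=
  \sum_(m : {ffun 'I_n -> bool})
     (\prod_(i < n) (if m i then q else 1 - q)) *
     gauss var (fun k => shift k + \sum_(i < n | m i) F i k) y.

Lemma mixdensE q (us : seq (T -> R)) shift var y :
  mixdens q us shift var y = mixd (size us) q (fun i => nth (fun _ => 0) us i) shift var y.
Proof.
rewrite /mixdens /mixd.
apply: eq_bigr => m _.
have E : (fun k => shift k + \sum_(i < size us | m i) tnth (in_tuple us) i k) =
         (fun k => shift k + \sum_(i < size us | m i) nth (fun _ => 0) us i k).
  apply: funext => k; congr (_ + _); apply: eq_bigr => i _.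
  by rewrite (tnth_nth (fun _ => 0)).
by rewrite E.
Qed.

Lemma mixd_ge0 n q F shift var y : 0 <= q <= 1 -> 0 <= mixd n q F shift var y.
Proof.
move=> /andP[q0 q1]; apply: sumr_ge0 => m _; rewrite mulr_ge0 ?gauss_ge0 //.
by apply: prodr_ge0 => i _; case: (m i) => //; rewrite subr_ge0.
Qed.

Lemma mixd_scale n q F F' shift shift' var s2 (w y y' : T -> R) :
  (forall k, 0 < w k) -> (forall k, 0 < var k) -> (forall k, s2 k = w k ^+ 2 * var k) ->
  (forall i k, F' i k = w k * F i k) ->
  (forall k, y' k - shift' k = w k * (y k - shift k)) ->
  mixd n q F shift var y = (\prod_k w k) * mixd n q F' shift' s2 y'.
Proof.
move=> w0 v0 s2E FE yE; rewrite /mixd mulr_sumr; apply: eq_bigr => m _.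
rewrite (@gauss_scale var s2 w _ (fun k => shift' k + \sum_(i < n | m i) F' i k) y y') //.
  by rewrite mulrCA.
move=> k; rewrite opprD addrA yE.
have -> : \sum_(i < n | m i) F' i k = w k * \sum_(i < n | m i) F i k.
  by rewrite mulr_sumr; apply: eq_bigr => i _; rewrite FE.
ring.
Qed.
End Dens.



Section Norm.
Variables (R : realType) (d G : nat) (grp : 'I_d -> 'I_G) (C : 'I_G -> R).

Lemma clip_group (v : 'I_d -> R) g : 0 < C g ->
  \sum_(k < d | grp k == g) (clip grp C v k) ^+ 2 <= C g ^+ 2.
Proof.
move=> C0.
set N2 := \sum_(k < d | grp k == g) v k ^+ 2.
set M := Num.max 1 (Defs.gnorm grp g v / C g).
have M1 : 1 <= M by rewrite le_max lexx.
have M0 : 0 < M by apply: lt_le_trans M1.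
have -> : \sum_(k < d | grp k == g) (clip grp C v k) ^+ 2 = N2 / M ^+ 2.
  rewrite /N2 mulr_suml; apply: eq_bigr => k /eqP gk.
  by rewrite /clip gk expr_div_n.
have N0 : 0 <= N2 by apply: sumr_ge0 => k _; exact: sqr_ge0.
have hM : Num.sqrt N2 <= C g * M.
  rewrite mulrC -ler_pdivrMr //.
  by rewrite le_max /Defs.gnorm -/N2 lexx orbT.
rewrite ler_pdivrMr ?exprn_gt0 //.
rewrite -(sqr_sqrtr N0) -exprMn.
by rewrite lerXn2r // ?nnegrE ?sqrtr_ge0 // mulr_ge0 // ltW.
Qed.

Lemma l2_bound (sigma : 'I_G -> R) (beta : R) (v : 'I_d -> R) :
  (0 < G)%N -> (forall g, 0 < C g) -> (forall g, 0 < sigma g) -> 0 < beta ->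
  l2norm (fun k => sigma_eff beta sigma / (sigma (grp k) * C (grp k)) *
                   (beta * clip grp C v k)) <= 1.
Proof.
move=> G0 C0 s0 b0.
set S := \sum_(g < G) (sigma g)^-2.
have S0 : 0 < S.
  rewrite /S (bigD1 (Ordinal G0)) //=.
  have h1 : 0 < (sigma (Ordinal G0))^-2 by rewrite invr_gt0 exprn_gt0.
  have h2 : 0 <= \sum_(i < G | i != Ordinal G0) (sigma i)^-2.
    by apply: sumr_ge0 => i _; rewrite invr_ge0 exprn_ge0 // ltW.
  lra.
set s := sigma_eff beta sigma.
have sE : s ^+ 2 * beta ^+ 2 * S = 1.
  rewrite /s /sigma_eff -/S exprVn exprMn sqr_sqrtr ?ltW //.
  by field; apply/andP; split; rewrite gt_eqF.
rewrite /l2norm -sqrtr1; apply: ler_wsqrtr.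
rewrite (partition_big grp xpredT) //=.
rewrite -sE /S mulr_sumr; apply: ler_sum => g _.
have -> : \sum_(k < d | grp k == g)
    (s / (sigma (grp k) * C (grp k)) * (beta * clip grp C v k)) ^+ 2
  = (s * beta / (sigma g * C g)) ^+ 2 * \sum_(k < d | grp k == g) (clip grp C v k) ^+ 2.
  rewrite mulr_sumr; apply: eq_bigr => k /eqP ->.
  by rewrite -!exprMn; congr (_ ^+ 2); ring.
have H1 := ler_wpM2l (sqr_ge0 (s * beta / (sigma g * C g))) (@clip_group v g (C0 g : 0 < C g)).
apply: le_trans H1 _.
have sg := s0 g; have cg := C0 g.
rewrite le_eqVlt; apply/orP; left; apply/eqP.
field; by apply/andP; split; rewrite gt_eqF.
Qed.

Lemma sumS_gt0 (sigma : 'I_G -> R) : (0 < G)%N -> (forall g, 0 < sigma g) ->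
  0 < \sum_(g < G) (sigma g)^-2.
Proof.
move=> G0 s0; rewrite (bigD1 (Ordinal G0)) //=.
have h1 : 0 < (sigma (Ordinal G0))^-2 by rewrite invr_gt0 exprn_gt0.
have h2 : 0 <= \sum_(i < G | i != Ordinal G0) (sigma i)^-2.
  by apply: sumr_ge0 => i _; rewrite invr_ge0 exprn_ge0 // ltW.
lra.
Qed.
End Norm.

Lemma nth_map_ex (A B : Type) (F : A -> B) (l : seq A) (y0 : B) i :
  (i < size l)%N -> exists x, nth y0 (map F l) i = F x.
Proof.
elim: l i => [|a l IH] [|i] //= H; first by exists a.
exact: IH.
Qed.


Local Close Scope classical_set_scope.

Theorem theoremB2 (R : realType) (X : Type) (d G : nat) (grp : 'I_d -> 'I_G)
  (C sigma : 'I_G -> R) (beta q : R) (grad : X -> 'I_d -> R) (b : 'I_d -> R)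
  (eps_SGM : R -> R -> R -> R) :
  (0 < G)%N ->
  (forall g, 0 < C g) ->
  (forall g, 0 < sigma g) ->
  0 < beta <= 1 ->
  0 <= q <= 1 ->
  (forall lam q' s, 1 < lam -> 0 <= q' <= 1 -> 0 < s ->
     SGM_rdp_bound lam q' s (eps_SGM lam q' s)) ->
  forall lam : R, 1 < lam ->
  forall D D' : seq X, adjacent_ds D D' ->
  (renyi lam (sma_dens grp C sigma beta q grad b D)
             (sma_dens grp C sigma beta q grad b D')
     <= (eps_SGM lam q (sigma_eff beta sigma))%:E)%E.
Proof.
move=> G0 C0 s0 /andP[b0 b1] q01 Hsgm lam lam1 D D' adj.
set s := sigma_eff beta sigma.
have sgt : 0 < s.
  rewrite /s /sigma_eff invr_gt0 mulr_gt0 // sqrtr_gt0.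
  exact: sumS_gt0.
pose w k := s / (sigma (grp k) * C (grp k)).
have w0 : forall k, 0 < w k.
  by move=> k; rewrite /w divr_gt0 // mulr_gt0.
pose var k := sigma (grp k) ^+ 2 * C (grp k) ^+ 2.
pose u0 := fun (x : X) k => beta * clip grp C (grad x) k.
pose g := fun (u : 'I_d -> R) k => w k * u k.
pose D1 := map g (map u0 D).
pose D1' := map g (map u0 D').
have key : forall (E : seq X) y, sma_dens grp C sigma beta q grad b E y =
    (\prod_k w k) * mixdens q (map g (map u0 E)) (fun _ => 0) (fun _ => s ^+ 2)
                       (fun k => w k * y k + (- (w k * b k))).
  move=> E y; rewrite /sma_dens !mixdensE !size_map.
  apply: mixd_scale => //.
  - by move=> k; rewrite /var mulr_gt0 // exprn_gt0.
  - move=> k; rewrite /w /var; have := C0 (grp k); have := s0 (grp k) => sg cg.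
    by field; apply/andP; split; rewrite gt_eqF.
  - move=> i k; case: (ltnP i (size (map u0 E))) => hi.
      by rewrite (nth_map (fun _ => 0)).
    by move: hi; rewrite size_map => hi; rewrite !nth_default ?size_map //= mulr0.
  - by move=> k; ring.
have Wge0 : 0 <= \prod_k w k by apply: prodr_ge0 => k _; exact: ltW.
have Wgt0 : 0 < \prod_k w k by apply: prodr_gt0 => k _; exact: w0.
have hW : (\prod_k w k) `^ lam * (\prod_k w k) `^ (1 - lam) = \prod_k w k.
  rewrite -powRD; last by apply/implyP => _; rewrite gt_eqF.
  by rewrite addrC subrK powRr1.
have Ieq : renyi lam (sma_dens grp C sigma beta q grad b D)
             (sma_dens grp C sigma beta q grad b D') =
           renyi lam (mixdens q D1 (fun _ => 0) (fun _ => s ^+ 2))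
                     (mixdens q D1' (fun _ => 0) (fun _ => s ^+ 2)).
  pose P1 := mixdens q D1 (fun _ => 0) (fun _ => s ^+ 2).
  pose Q1 := mixdens q D1' (fun _ => 0) (fun _ => s ^+ 2).
  have P0 : forall y, 0 <= P1 y by move=> y; rewrite /P1 mixdensE; exact: mixd_ge0.
  have Q0 : forall y, 0 <= Q1 y by move=> y; rewrite /Q1 mixdensE; exact: mixd_ge0.
  rewrite /renyi.
  have -> : integral_Rn (fun y => ((sma_dens grp C sigma beta q grad b D y) `^ lam *
                       (sma_dens grp C sigma beta q grad b D' y) `^ (1 - lam))%:E)
     = integral_Rn (fun y => ((P1 y) `^ lam * (Q1 y) `^ (1 - lam))%:E).
    rewrite -(@intRn_cov R _ w (fun k => - (w k * b k))
               (fun y => ((P1 y) `^ lam * (Q1 y) `^ (1 - lam))%:E) w0); last first.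
      by move=> y; rewrite lee_fin mulr_ge0 // powR_ge0.
    congr integral_Rn; apply: funext => y; rewrite !key -EFinM; congr (_%:E).
    rewrite -/P1 -/Q1.
    rewrite (powRM _ Wge0 (P0 _)) (powRM _ Wge0 (Q0 _)).
    by rewrite mulrACA hW.
  by [].
rewrite Ieq; apply: Hsgm => //.
- rewrite /D1 /D1'; case: adj => x [s1 [s2 [[E1 E2]|[E1 E2]]]]; rewrite E1 E2.
    by exists (g (u0 x)), (map g (map u0 s1)), (map g (map u0 s2)); left; rewrite !map_cat.
  by exists (g (u0 x)), (map g (map u0 s1)), (map g (map u0 s2)); right; rewrite !map_cat.
- move=> i; rewrite (tnth_nth (fun _ => 0)) /=.
  have hj := ltn_ord i; move: (nat_of_ord i) hj => j hj.
  have -> : D1 ++ D1' = map (g \o u0) (D ++ D') by rewrite /D1 /D1' -!map_cat -map_comp.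
  have hi : (j < size (D ++ D'))%N.
    by move: hj; rewrite size_cat !size_map -size_cat.
  have [x ->] := @nth_map_ex _ _ (g \o u0) (D ++ D') (fun _ => 0) j hi.
  exact: l2_bound.
Qed.
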